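(* Let $\beta>2\alpha>0$ with $\beta+2\alpha>1$ and $t\in\mathbb{R}^{s_N}$. For all $r>0$ sufficiently small (depending on $A$), $$\frac{J_N(t,r,\overrightarrow{m}^* )}{J_N(0,r,\overrightarrow{m}^* )}=\mathbb{E}_{\rho_N}\big[\exp\{t^TX\}\big],$$ where $X$ is an $s_N$-dimensional random variable whose distribution is strongly log-concave with density $$\rho_N(x)\propto\exp\Big\{-\tfrac{N}{s_N}\Big(\varphi_N\Big(\overrightarrow{m}^*+\sqrt{\tfrac{s_N}{N}}x\Big)-\varphi_N(\overrightarrow{m}^* )\Big)\Big\}\mathbf{1}_{[-\sqrt{N/s_N}\,r,\ \sqrt{N/s_N}\,r]^{s_N}}(x).$$
   Context: $A=\beta I+\alpha(P+P^T)$ is the $s_N\times s_N$ symmetric circulant matrix ($P$ the cyclic shift), $e_k$ the standard basis of $\mathbb{R}^{s_N}$, and $\varphi_N(x)=\frac12x^TAx-\sum_{k=1}^{s_N}\log\cosh(x^TAe_k)$. $m^*$ is the largest solution of $x=\tanh((\beta+2\alpha)x)$ and $\overrightarrow{m}^*=(m^*,\dots,m^* )\in\mathbb{R}^{s_N}$. For $t\in\mathbb{R}^{s_N}$ and $r>0$, $$J_N(t,r,\overrightarrow{m}^* )=\Big(\tfrac{N}{s_N}\Big)^{s_N/2}\exp\Big\{\tfrac{N}{s_N}\varphi_N(\overrightarrow{m}^* )-\sqrt{\tfrac{N}{s_N}}t^T\overrightarrow{m}^*\Big\}\int_{[m^*-r,m^*+r]^{s_N}}\exp\Big\{-\tfrac{N}{s_N}\varphi_N(x)+\sqrt{\tfrac{N}{s_N}}t^Tx\Big\}\mathrm{d}^{s_N}x.$$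 A distribution is strongly log-concave if it has a density $e^{-U}$ with $U$ strongly convex. *)

(* Defs.v *)
From Stdlib Require Import Reals Lra ClassicalEpsilon.
From Coquelicot Require Import Coquelicot.
Open Scope R_scope.

(* Vectors of R^s are represented as functions nat -> R; only the
   coordinates 0 .. s-1 are relevant. *)

Fixpoint rsum (n : nat) (f : nat -> R) : R :=
  match n with O => 0 | S k => rsum k f + f k end.

Definition dot (s : nat) (x y : nat -> R) : R := rsum s (fun k => x k * y k).

Definition sqnorm (s : nat) (x : nat -> R) : R := dot s x x.

(* (A x)_k for A = beta I + alpha (P + P^T), P the cyclic shift on R^s:
   (P x)_k = x_{k+1 mod s}, (P^T x)_k = x_{k-1 mod s}.  Since A is
   symmetric, x^T A e_k = (A x)_k. *)
Definition Amul (s : nat) (alpha beta : R) (x : nat -> R) (k : nat) : R :=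
  beta * x k + alpha * (x ((k + 1) mod s)%nat + x ((k + s - 1) mod s)%nat).

Definition phiN (s : nat) (alpha beta : R) (x : nat -> R) : R :=
  / 2 * dot s x (Amul s alpha beta x)
  - rsum s (fun k => ln (cosh (Amul s alpha beta x k))).

Definition cst (c : R) : nat -> R := fun _ => c.

Definition upd (x : nat -> R) (k : nat) (y : R) : nat -> R :=
  fun i => if Nat.eqb i k then y else x i.

Fixpoint boxint (n : nat) (a b : R) (f : (nat -> R) -> R) : R :=
  match n with
  | O => f (cst 0)
  | S k => RInt (fun y => boxint k a b (fun x => f (upd x k y))) a b
  end.

Definition in_box (s : nat) (a b : R) (x : nat -> R) : Prop :=
  forall k, (k < s)%nat -> a <= x k <= b.

Definition JN (s N : nat) (alpha beta : R) (t : nat -> R) (r mstar : R) : R :=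
  let c := INR N / INR s in
  (sqrt c) ^ s
  * exp (c * phiN s alpha beta (cst mstar) - sqrt c * dot s t (cst mstar))
  * boxint s (mstar - r) (mstar + r)
      (fun x => exp (- c * phiN s alpha beta x + sqrt c * dot s t x)).

(* unnormalised density of rho_N (without the indicator; the indicator is
   taken into account by integrating over the box / in rhoN below) *)
Definition rho_core (s N : nat) (alpha beta mstar : R) (x : nat -> R) : R :=
  let c := INR N / INR s in
  exp (- c * (phiN s alpha beta (fun k => mstar + sqrt (INR s / INR N) * x k)
              - phiN s alpha beta (cst mstar))).

Definition rho_box_radius (s N : nat) (r : R) : R := sqrt (INR N / INR s) * r.

Definition rho_Z (s N : nat) (alpha beta mstar r : R) : R :=
  let R0 := rho_box_radius s N r in
  boxint s (- R0) R0 (rho_core s N alpha beta mstar).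

Definition rhoN (s N : nat) (alpha beta mstar r : R) (x : nat -> R) : R :=
  let R0 := rho_box_radius s N r in
  (rho_core s N alpha beta mstar x / rho_Z s N alpha beta mstar r)
  * (if excluded_middle_informative (in_box s (- R0) R0 x) then 1 else 0).

(* E_{rho_N}[exp(t^T X)]; rhoN vanishes off the box, so integrating over the
   box is integrating over R^s *)
Definition expect_exp (s N : nat) (alpha beta mstar r : R) (t : nat -> R) : R :=
  let R0 := rho_box_radius s N r in
  boxint s (- R0) R0 (fun x => exp (dot s t x) * rhoN s N alpha beta mstar r x).

Definition lincomb (l : R) (x y : nat -> R) : nat -> R :=
  fun k => l * x k + (1 - l) * y k.

Definition convex_set (s : nat) (K : (nat -> R) -> Prop) : Prop :=
  forall x y l, K x -> K y -> 0 <= l <= 1 -> K (lincomb l x y).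

Definition strongly_convex_on (s : nat) (K : (nat -> R) -> Prop)
  (U : (nat -> R) -> R) : Prop :=
  exists c, 0 < c /\
  forall x y l, K x -> K y -> 0 <= l <= 1 ->
    U (lincomb l x y) <= l * U x + (1 - l) * U y
                         - c / 2 * l * (1 - l) * sqnorm s (fun k => x k - y k).

(* A density rho on R^s is strongly log-concave: rho = e^{-U} with U strongly
   convex (U extended-valued, = +oo outside a convex set K). *)
Definition strongly_log_concave (s : nat) (rho : (nat -> R) -> R) : Prop :=
  exists (K : (nat -> R) -> Prop) (U : (nat -> R) -> R),
    convex_set s K /\ strongly_convex_on s K U /\
    (forall x, K x -> rho x = exp (- U x)) /\
    (forall x, ~ K x -> rho x = 0).

(* Main.v *)
Require Import Defs.
From Stdlib Require Import Reals Lra Lia Psatz FunctionalExtensionality Classical ClassicalEpsilon.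
From Coquelicot Require Import Coquelicot.
Open Scope R_scope.

Ltac req := match goal with |- @eq _ ?A ?B => change (@eq R A B) end.

Lemma Lub_full (E : R -> Prop) : (forall x, E x) -> real (Lub_Rbar E) = 0.
Proof.
  intros HE. destruct (Lub_Rbar_correct E) as [H1 H2].
  destruct (Lub_Rbar E) as [l| |]; auto.
  exfalso. assert (Hl := H1 (l+1) (HE _)). simpl in Hl. lra.
Qed.

Lemma RInt_not_ex (f : R -> R) a b : ~ ex_RInt f a b -> RInt f a b = 0.
Proof.
  intros H. unfold RInt, iota. unfold lim; simpl. unfold R_complete_lim.
  apply Lub_full. intros x y Hy. exfalso. apply H. exists y. exact Hy.
Qed.

Lemma RInt_scal_any (f : R -> R) a b l : RInt (fun x => l * f x) a b = l * RInt f a b.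
Proof.
  destruct (Req_dec l 0) as [->|Hl].
  - rewrite (RInt_ext (fun x => 0 * f x) (fun _ => 0)).
    2:{ intros. apply Rmult_0_l. }
    rewrite RInt_const. change ((b - a) * 0 = 0 * RInt f a b).
    rewrite Rmult_0_r, Rmult_0_l. reflexivity.
  - destruct (classic (ex_RInt f a b)) as [He|He].
    + apply is_RInt_unique.
      apply (is_RInt_ext (fun y => scal l (f y))). { intros. reflexivity. }
      apply (is_RInt_scal f a b l).
      apply (RInt_correct (V:=R_CompleteNormedModule)). exact He.
    + rewrite (RInt_not_ex f a b He). rewrite RInt_not_ex. rewrite Rmult_0_r. reflexivity.
      intros Hc. apply He.
       
      apply (ex_RInt_scal _ _ _ (/l)) in Hc.
      eapply ex_RInt_ext; [|exact Hc].
      intros x _. cbv beta. change (/ l * (l * f x) = f x). field. exact Hl.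
Qed.

Lemma RInt_comp_lin_any (f : R -> R) u v a b : u <> 0 ->
  RInt (fun y => u * f (u * y + v)) a b = RInt f (u * a + v) (u * b + v).
Proof.
  intros Hu. destruct (classic (ex_RInt f (u*a+v) (u*b+v))) as [He|He].
  - apply is_RInt_unique.
    apply (is_RInt_ext (fun y => scal u (f (u * y + v)))). { intros. reflexivity. }
    apply (is_RInt_comp_lin f u v a b).
    apply (RInt_correct (V:=R_CompleteNormedModule)). exact He.
  - rewrite (RInt_not_ex f _ _ He). apply RInt_not_ex.
    intros Hc. apply He.
    assert (Hc' : ex_RInt (fun y => u * f (u*y+v)) (/u*(u*a+v) + -v/u) (/u*(u*b+v) + -v/u)).
    { replace (/ u * (u * a + v) + - v / u) with a by (field; exact Hu).
      replace (/ u * (u * b + v) + - v / u) with b by (field; exact Hu). exact Hc. }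
    apply (ex_RInt_comp_lin _ (/u) (- v / u) (u*a+v) (u*b+v)) in Hc'. clear Hc. rename Hc' into Hc.
    eapply ex_RInt_ext; [|exact Hc]. intros x _. cbv beta.
    change (/ u * (u * f (u * (/ u * x + - v / u) + v)) = f x).
    replace (u * (/ u * x + - v / u) + v) with x by (field; exact Hu). field. exact Hu.
Qed.

Lemma rsum_ext n f g : (forall k, (k < n)%nat -> f k = g k) -> rsum n f = rsum n g.
Proof. induction n; simpl; intros H; auto. rewrite IHn by (intros; apply H; lia). rewrite H by lia. auto. Qed.

Lemma rsum_comb n a b c f g h : rsum n (fun k => a * f k + b * g k + c * h k) = a * rsum n f + b * rsum n g + c * rsum n h.
Proof. induction n; simpl. ring. rewrite IHn. ring. Qed.

Lemma rsum_plus n f g : rsum n (fun k => f k + g k) = rsum n f + rsum n g.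
Proof. induction n; simpl. ring. rewrite IHn. ring. Qed.

Lemma rsum_minus n f g : rsum n (fun k => f k - g k) = rsum n f - rsum n g.
Proof. induction n; simpl. ring. rewrite IHn. ring. Qed.

Lemma rsum_scal n c f : rsum n (fun k => c * f k) = c * rsum n f.
Proof. induction n; simpl. ring. rewrite IHn. ring. Qed.

Lemma rsum_le n f g : (forall k, (k<n)%nat -> f k <= g k) -> rsum n f <= rsum n g.
Proof. induction n; simpl; intros H. lra. assert (H1 := H n (Nat.lt_succ_diag_r n)). assert (rsum n f <= rsum n g) by (apply IHn; intros; apply H; lia). lra. Qed.

Lemma rsum_const n c : rsum n (fun _ => c) = INR n * c.
Proof. induction n; simpl rsum. simpl. ring. rewrite IHn, S_INR. ring. Qed.

Lemma rsum_abs n f : Rabs (rsum n f) <= rsum n (fun k => Rabs (f k)).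
Proof. induction n; simpl. rewrite Rabs_R0. lra. eapply Rle_trans. apply Rabs_triang. lra. Qed.

Lemma rsum_nonneg n f : (forall k, (k<n)%nat -> 0 <= f k) -> 0 <= rsum n f.
Proof. intros H. rewrite <- (Rmult_0_r (INR n)). rewrite <- rsum_const. apply rsum_le. auto. Qed.

Lemma rsum_term n f j : (forall k, (k<n)%nat -> 0 <= f k) -> (j < n)%nat -> f j <= rsum n f.
Proof.
  induction n; intros H Hj. lia. simpl.
  destruct (Nat.eq_dec j n) as [->|Hne].
  - assert (0 <= rsum n f) by (apply rsum_nonneg; intros; apply H; lia). lra.
  - assert (f j <= rsum n f) by (apply IHn; [intros; apply H; lia| lia]).
    assert (0 <= f n) by (apply H; lia). lra.
Qed.

Lemma rsum_shift n f : rsum (S n) f = f 0%nat + rsum n (fun k => f (S k)).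
Proof.
  induction n. simpl. ring.
  change (rsum (S (S n)) f) with (rsum (S n) f + f (S n)).
  rewrite IHn. simpl. ring.
Qed.

Lemma rsum_cyc1 s f : (0<s)%nat -> rsum s (fun k => f ((k+1) mod s)%nat) = rsum s f.
Proof.
  intros Hs. destruct s as [|n]. lia.
  change (rsum (S n) (fun k => f ((k+1) mod S n)%nat)) with
    (rsum n (fun k => f ((k+1) mod S n)%nat) + f ((n+1) mod S n)%nat).
  rewrite rsum_shift.
  replace ((n+1) mod S n)%nat with 0%nat.
  2:{ replace (n+1)%nat with (S n) by lia. rewrite Nat.Div0.mod_same. auto. }
  rewrite (rsum_ext n _ (fun k => f (S k))). ring.
  intros k Hk. rewrite Nat.mod_small by lia. f_equal. lia.
Qed.

Lemma rsum_cyc2 s f : (0<s)%nat -> rsum s (fun k => f ((k + s - 1) mod s)%nat) = rsum s f.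
Proof.
  intros Hs. destruct s as [|n]. lia.
  rewrite rsum_shift.
  change (rsum (S n) f) with (rsum n f + f n).
  replace ((0 + S n - 1) mod S n)%nat with n by (rewrite Nat.mod_small; lia).
  rewrite (rsum_ext n _ f). ring.
  intros k Hk. f_equal. replace (S k + S n - 1)%nat with (k + 1 * S n)%nat by lia.
  rewrite Nat.Div0.mod_add. apply Nat.mod_small. lia.
Qed.

Lemma in_box_upd n a b x y : in_box n a b x -> a <= y <= b -> in_box (S n) a b (upd x n y).
Proof. intros H Hy k Hk. unfold upd. destruct (Nat.eqb_spec k n). auto. apply H. lia. Qed.

Lemma boxint_ext n a b f g : a <= b -> (forall x, in_box n a b x -> f x = g x) ->
  boxint n a b f = boxint n a b g.
Proof.
  revert f g; induction n; intros f g Hab H; simpl.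
  - apply H. intros k Hk; lia.
  - apply RInt_ext. intros y Hy. rewrite Rmin_left, Rmax_right in Hy by lra.
    apply IHn; auto. intros x Hx. apply H. apply in_box_upd; auto; lra.
Qed.

Lemma boxint_scal n a b l f : boxint n a b (fun x => l * f x) = l * boxint n a b f.
Proof.
  revert f; induction n; intros f; simpl. auto.
  rewrite <- RInt_scal_any. apply RInt_ext. intros y _. exact (IHn (fun x => f (upd x n y))).
Qed.

Definition depends_on (n : nat) (f : (nat -> R) -> R) :=
  forall x y, (forall k, (k < n)%nat -> x k = y k) -> f x = f y.
Definition aff (u v : R) (y : nat -> R) : nat -> R := fun k => v + u * y k.

Lemma boxint_cov n u v a b f : u <> 0 -> depends_on n f ->
  boxint n (u * a + v) (u * b + v) f = u ^ n * boxint n a b (fun y => f (aff u v y)).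
Proof.
  revert f; induction n; intros f Hu Hf; simpl.
  - rewrite Rmult_1_l. apply Hf. intros; lia.
  - rewrite <- (RInt_comp_lin_any _ u v a b Hu).
    rewrite <- RInt_scal_any. apply RInt_ext. intros y _.
    rewrite IHn; auto.
    + rewrite Rmult_assoc. f_equal. f_equal. f_equal. extensionality x. f_equal.
      extensionality k. unfold upd, aff. destruct (Nat.eqb k n); ring.
    + intros x x' H; apply Hf; intros k Hk; unfold upd; destruct (Nat.eqb_spec k n); auto; apply H; lia.
Qed.

Definition Dist n (x y : nat -> R) := rsum n (fun k => Rabs (x k - y k)).
Definition Lipb n a b f := exists L, 0 <= L /\ forall x y, in_box n a b x -> in_box n a b y ->
  Rabs (f x - f y) <= L * Dist n x y.

Definition clamp a b y := Rmax a (Rmin b y).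
Lemma clamp_in a b y : a <= b -> a <= clamp a b y <= b.
Proof. intros. unfold clamp, Rmax, Rmin. repeat destruct Rle_dec; lra. Qed.
Lemma clamp_id a b y : a <= y <= b -> clamp a b y = y.
Proof. intros. unfold clamp, Rmax, Rmin. repeat destruct Rle_dec; lra. Qed.
Lemma clamp_lip a b y y' : a <= b -> Rabs (clamp a b y - clamp a b y') <= Rabs (y - y').
Proof. intros. unfold clamp, Rmax, Rmin. repeat destruct Rle_dec; unfold Rabs; repeat destruct Rcase_abs; lra. Qed.

Lemma lip_cont (h : R -> R) K : (forall y y', Rabs (h y - h y') <= K * Rabs (y - y')) -> forall x, continuous h x.
Proof.
  intros H x. apply continuity_pt_filterlim.
  intros eps Heps. exists (eps / (Rabs K + 1)). split.
  { apply Rdiv_lt_0_compat; [lra|]. pose proof (Rabs_pos K); lra. }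
  intros y [_ Hy]. simpl in *. unfold R_dist in *.
  eapply Rle_lt_trans. apply H.
  pose proof (Rabs_pos K). pose proof (Rabs_pos (y - x)).
  apply Rle_lt_trans with (Rabs K * Rabs (y - x)).
  { apply Rmult_le_compat_r; [lra| apply RRle_abs]. }
  apply Rle_lt_trans with (Rabs K * (eps / (Rabs K + 1))).
  { apply Rmult_le_compat_l; lra. }
  apply Rmult_lt_reg_r with (Rabs K + 1). lra.
  field_simplify; lra.
Qed.

Lemma Dist_upd n x x' y : Dist n (upd x n y) (upd x' n y) = Dist n x x'.
Proof. unfold Dist. apply rsum_ext. intros k Hk. unfold upd. destruct (Nat.eqb_spec k n). lia. auto. Qed.

Lemma Dist_upd_S n x x' y y' : Dist (S n) (upd x n y) (upd x' n y') = Dist n x x' + Rabs (y - y').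
Proof.
  unfold Dist. simpl rsum. f_equal. apply rsum_ext. intros k Hk. unfold upd. destruct (Nat.eqb_spec k n). lia. auto.
  unfold upd. rewrite Nat.eqb_refl. auto.
Qed.

Lemma Dist_self n x : Dist n x x = 0.
Proof. unfold Dist. rewrite (rsum_ext n _ (fun _ => 0)). rewrite rsum_const. ring.
  intros. unfold Rminus. rewrite Rplus_opp_r, Rabs_R0. auto. Qed.

Lemma lipb_upd n a b f y : Lipb (S n) a b f -> a <= y <= b -> Lipb n a b (fun x => f (upd x n y)).
Proof.
  intros [L [HL H]] Hy. exists L. split; auto. intros x x' Hx Hx'.
  eapply Rle_trans. apply H; apply in_box_upd; auto.
  rewrite Dist_upd_S. replace (Rabs (y - y)) with 0 by (unfold Rminus; rewrite Rplus_opp_r, Rabs_R0; auto).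
  rewrite Rplus_0_r. lra.
Qed.

Definition P1 n a b := forall f g eps, Lipb n a b f -> Lipb n a b g ->
  (forall x, in_box n a b x -> Rabs (f x - g x) <= eps) ->
  Rabs (boxint n a b f - boxint n a b g) <= (b - a) ^ n * eps.

Lemma G_lip n a b f : a < b -> P1 n a b -> Lipb (S n) a b f ->
  exists K, forall y y', Rabs (boxint n a b (fun x => f (upd x n (clamp a b y)))
     - boxint n a b (fun x => f (upd x n (clamp a b y')))) <= K * Rabs (y - y').
Proof.
  intros Hab HP Hf0. assert (Hf1 := Hf0). destruct Hf1 as [L [HL Hf]].
  exists ((b - a) ^ n * L). intros y y'.
  assert (Hc := clamp_in a b y). assert (Hc' := clamp_in a b y').
  eapply Rle_trans. apply HP with (eps := L * Rabs (clamp a b y - clamp a b y')).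
  - apply lipb_upd. exact Hf0. lra.
  - apply lipb_upd. exact Hf0. lra.
  - intros x Hx. eapply Rle_trans. apply Hf; apply in_box_upd; auto; lra.
    rewrite Dist_upd_S, Dist_self. lra.
  - rewrite Rmult_assoc. apply Rmult_le_compat_l. apply pow_le; lra.
    apply Rmult_le_compat_l. lra. apply clamp_lip. lra.
Qed.

Lemma boxint_S_clamp n a b f : a <= b -> boxint (S n) a b f =
  RInt (fun y => boxint n a b (fun x => f (upd x n (clamp a b y)))) a b.
Proof.
  intros Hab. simpl. apply RInt_ext. intros y Hy. rewrite Rmin_left, Rmax_right in Hy by lra.
  rewrite clamp_id by lra. reflexivity.
Qed.

Lemma boxint_diff n a b : a < b -> P1 n a b.
Proof.
  intros Hab. induction n; intros f g eps Hf Hg H.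
  - simpl. rewrite Rmult_1_l. apply H. intros k Hk; lia.
  - rewrite !(boxint_S_clamp n a b) by lra.
    destruct (G_lip n a b f Hab IHn Hf) as [Kf HKf].
    destruct (G_lip n a b g Hab IHn Hg) as [Kg HKg].
    set (Gf := fun y => boxint n a b (fun x => f (upd x n (clamp a b y)))) in *.
    set (Gg := fun y => boxint n a b (fun x => g (upd x n (clamp a b y)))) in *.
    assert (Ef : ex_RInt Gf a b).
    { apply (ex_RInt_continuous (V:=R_CompleteNormedModule)). intros. apply (lip_cont Gf Kf). exact HKf. }
    assert (Eg : ex_RInt Gg a b).
    { apply (ex_RInt_continuous (V:=R_CompleteNormedModule)). intros. apply (lip_cont Gg Kg). exact HKg. }
    assert (Hm := RInt_minus Gf Gg a b Ef Eg).
    change (RInt (fun x => Gf x - Gg x) a b = RInt Gf a b - RInt Gg a b) in Hm.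
    rewrite <- Hm.
    replace ((b - a) ^ S n * eps) with ((b - a) * ((b - a) ^ n * eps)) by (simpl; ring).
    apply abs_RInt_le_const. lra.
    apply (ex_RInt_minus (V:=R_NormedModule) Gf Gg a b Ef Eg).
    intros t Ht. unfold Gf, Gg. apply IHn.
    + apply lipb_upd; auto. apply clamp_in; lra.
    + apply lipb_upd; auto. apply clamp_in; lra.
    + intros x Hx. apply H. apply in_box_upd; auto. apply clamp_in; lra.
Qed.

Lemma boxint_pos n a b f : a < b -> Lipb n a b f -> (forall x, in_box n a b x -> 0 < f x) ->
  0 < boxint n a b f.
Proof.
  intros Hab. revert f. induction n; intros f Hf H.
  - simpl. apply H. intros k Hk; lia.
  - rewrite (boxint_S_clamp n a b) by lra.
    destruct (G_lip n a b f Hab (boxint_diff n a b Hab) Hf) as [Kf HKf].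
    apply RInt_gt_0. exact Hab.
    + intros y Hy. apply IHn. apply lipb_upd; auto. apply clamp_in; lra.
      intros x Hx. apply H. apply in_box_upd; auto. apply clamp_in; lra.
    + intros. apply (lip_cont _ Kf). exact HKf.
Qed.

Lemma cosh_pos x : 0 < cosh x.
Proof. unfold cosh. pose proof (exp_pos x); pose proof (exp_pos (-x)). lra. Qed.

Lemma tanh_E x : tanh x = (exp x ^ 2 - 1) / (exp x ^ 2 + 1).
Proof. unfold tanh, sinh, cosh. rewrite exp_Ropp. pose proof (exp_pos x). field. split; nra. Qed.

Lemma d_lncosh x : derivable_pt_lim (fun x => ln (cosh x)) x (tanh x).
Proof.
  apply is_derive_Reals. unfold cosh. auto_derive.
  - pose proof (exp_pos x); pose proof (exp_pos (-x)). lra.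
  - unfold tanh, sinh, cosh. pose proof (exp_pos x); pose proof (exp_pos (-x)). field. lra.
Qed.

Lemma d_tanh x : derivable_pt_lim tanh x (1 - tanh x ^ 2).
Proof.
  apply is_derive_Reals. unfold tanh, sinh, cosh. auto_derive.
  - pose proof (exp_pos x); pose proof (exp_pos (-x)). lra.
  - pose proof (exp_pos x); pose proof (exp_pos (-x)). field. lra.
Qed.

Lemma tanh_eq x : tanh x * (exp x ^ 2 + 1) = exp x ^ 2 - 1.
Proof. rewrite tanh_E. pose proof (exp_pos x). field. nra. Qed.

Lemma tanh_bounds x : -1 < tanh x < 1.
Proof.
  pose proof (tanh_eq x). pose proof (exp_pos x).
  assert (0 < exp x ^ 2) by nra. split; nra.
Qed.

Lemma tanh_0 : tanh 0 = 0.
Proof. rewrite tanh_E, exp_0. field. Qed.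

Lemma tanh_mono x y : x <= y -> tanh x <= tanh y.
Proof.
  intros H. pose proof (tanh_eq x). pose proof (tanh_eq y).
  pose proof (exp_pos x). pose proof (exp_pos y).
  assert (exp x <= exp y). { destruct H. apply Rlt_le, exp_increasing; auto. subst; lra. }
  assert (Hw : exp x ^ 2 <= exp y ^ 2) by nra.
  set (W1 := exp x ^ 2) in *. set (W2 := exp y ^ 2) in *.
  assert (0 < W1) by (unfold W1; nra).
  pose proof (tanh_bounds x). pose proof (tanh_bounds y).
  destruct (Rle_dec (tanh x) (tanh y)); auto. exfalso.
  assert ((1 - tanh x) * (W1 + 1) = 2) by nra.
  assert ((1 - tanh y) * (W2 + 1) = 2) by nra.
  assert ((1 - tanh x) * (W1 + 1) < (1 - tanh y) * (W2 + 1)).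
  { apply Rlt_le_trans with ((1 - tanh y) * (W1 + 1)).
    apply Rmult_lt_compat_r; lra. apply Rmult_le_compat_l; lra. }
  lra.
Qed.

Lemma tanh_nonneg x : 0 <= x -> 0 <= tanh x.
Proof. intros. rewrite <- tanh_0. apply tanh_mono; auto. Qed.

Lemma mvt_lip f f' K : (forall x, derivable_pt_lim f x (f' x)) -> (forall x, Rabs (f' x) <= K) ->
  forall u v, Rabs (f u - f v) <= K * Rabs (u - v).
Proof.
  intros Hd HK u v.
  assert (HK0 : 0 <= K) by (pose proof (HK 0); pose proof (Rabs_pos (f' 0)); lra).
  destruct (Rtotal_order u v) as [H|[H|H]].
  - destruct (MVT_cor2 f f' u v H (fun c _ => Hd c)) as [c [Hc _]].
    rewrite Rabs_minus_sym. rewrite Hc. rewrite Rabs_mult. rewrite (Rabs_minus_sym u v).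
    apply Rmult_le_compat_r. apply Rabs_pos. apply HK.
  - subst. unfold Rminus. rewrite !Rplus_opp_r, Rabs_R0. lra.
  - destruct (MVT_cor2 f f' v u H (fun c _ => Hd c)) as [c [Hc _]].
    rewrite Hc. rewrite Rabs_mult.
    apply Rmult_le_compat_r. apply Rabs_pos. apply HK.
Qed.

Lemma lncosh_lip u v : Rabs (ln (cosh u) - ln (cosh v)) <= 1 * Rabs (u - v).
Proof.
  apply (mvt_lip (fun x => ln (cosh x)) tanh). apply d_lncosh.
  intros x. pose proof (tanh_bounds x). unfold Rabs; destruct Rcase_abs; lra.
Qed.

Lemma tanh_lip u v : Rabs (tanh u - tanh v) <= 1 * Rabs (u - v).
Proof.
  apply (mvt_lip tanh (fun x => 1 - tanh x ^ 2)). apply d_tanh.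
  intros x. pose proof (tanh_bounds x). unfold Rabs; destruct Rcase_abs; nra.
Qed.

Lemma tanh_incr_lip u0 q x y : 0 <= u0 -> 1 - tanh u0 ^ 2 <= q -> u0 <= x -> x <= y ->
  tanh y - tanh x <= q * (y - x).
Proof.
  intros H0 Hq Hx Hxy. destruct (Req_dec x y) as [->|Hne]. lra.
  destruct (MVT_cor2 tanh (fun x => 1 - tanh x ^ 2) x y) as [c [Hc Hcin]]. lra.
  intros; apply d_tanh.
  rewrite Hc. assert (tanh u0 <= tanh c) by (apply tanh_mono; lra).
  assert (0 <= tanh u0) by (apply tanh_nonneg; lra).
  assert (tanh u0 ^ 2 <= tanh c ^ 2) by nra.
  apply Rmult_le_compat_r; lra.
Qed.

Definition Fq q u := q / 2 * u ^ 2 - ln (cosh u).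

Lemma d_Fq q u : derivable_pt_lim (Fq q) u (q * u - tanh u).
Proof.
  apply is_derive_Reals. unfold Fq, cosh. auto_derive.
  - pose proof (exp_pos u); pose proof (exp_pos (-u)). lra.
  - unfold tanh, sinh, cosh. pose proof (exp_pos u); pose proof (exp_pos (-u)). field. lra.
Qed.

Lemma Fq_tangent u0 q x y : 0 <= u0 -> 1 - tanh u0 ^ 2 <= q -> u0 <= x -> u0 <= y ->
  Fq q x + (q * x - tanh x) * (y - x) <= Fq q y.
Proof.
  intros H0 Hq Hx Hy. destruct (Rtotal_order x y) as [H|[H|H]].
  - destruct (MVT_cor2 (Fq q) (fun u => q * u - tanh u) x y H (fun c _ => d_Fq q c)) as [c [Hc Hcin]].
    assert (tanh c - tanh x <= q * (c - x)) by (apply (tanh_incr_lip u0); lra).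
    assert ((q * x - tanh x) * (y - x) <= (q * c - tanh c) * (y - x)).
    { apply Rmult_le_compat_r; lra. }
    lra.
  - subst. lra.
  - destruct (MVT_cor2 (Fq q) (fun u => q * u - tanh u) y x H (fun c _ => d_Fq q c)) as [c [Hc Hcin]].
    assert (tanh x - tanh c <= q * (x - c)) by (apply (tanh_incr_lip u0); lra).
    assert ((q * c - tanh c) * (x - y) <= (q * x - tanh x) * (x - y)).
    { apply Rmult_le_compat_r; lra. }
    lra.
Qed.

Lemma g_conv u0 q a b l : 0 <= u0 -> 1 - tanh u0 ^ 2 <= q -> u0 <= a -> u0 <= b -> 0 <= l <= 1 ->
  l * ln (cosh a) + (1 - l) * ln (cosh b) - ln (cosh (l * a + (1 - l) * b))
  <= q / 2 * l * (1 - l) * (a - b) ^ 2.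
Proof.
  intros H0 Hq Ha Hb Hl.
  set (z := l * a + (1 - l) * b).
  assert (Hz : u0 <= z) by (unfold z; nra).
  assert (H1 := Fq_tangent u0 q z a H0 Hq Hz Ha).
  assert (H2 := Fq_tangent u0 q z b H0 Hq Hz Hb).
  set (G := q * z - tanh z) in *.
  assert (H1' := Rmult_le_compat_l l _ _ (proj1 Hl) H1).
  assert (H2' := Rmult_le_compat_l (1 - l) _ _ (ltac:(lra)) H2).
  unfold Fq in *.
  assert (E : l * (G * (a - z)) + (1 - l) * (G * (b - z)) = 0) by (unfold z; ring).
  assert (E2 : q / 2 * z ^ 2 = q / 2 * (l * a ^ 2 + (1 - l) * b ^ 2) - q / 2 * l * (1 - l) * (a - b) ^ 2)
    by (unfold z; ring).
  set (ga := ln (cosh a)) in *. set (gb := ln (cosh b)) in *. set (gz := ln (cosh z)) in *.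
  clearbody G z ga gb gz. nra.
Qed.

Lemma cosh_gt1 x : 0 < x -> 1 < cosh x.
Proof.
  intros H. unfold cosh. rewrite exp_Ropp. assert (1 < exp x) by (rewrite <- exp_0; apply exp_increasing; auto).
  assert (exp x + / exp x > 2).
  { assert (/ exp x * exp x = 1) by (field; lra). assert (0 < / exp x) by (apply Rinv_0_lt_compat; lra). nra. }
  lra.
Qed.

Lemma sinh_gt z : 0 < z -> z < sinh z.
Proof.
  intros Hz.
  assert (Hd : forall c, derivable_pt_lim (fun x => sinh x - x) c (cosh c - 1)).
  { intros c. apply is_derive_Reals. unfold sinh, cosh. auto_derive. auto. field. }
  destruct (MVT_cor2 (fun x => sinh x - x) (fun c => cosh c - 1) 0 z Hz (fun c _ => Hd c)) as [c [Hc Hcin]].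
  assert (sinh 0 = 0) by (unfold sinh; rewrite Ropp_0, exp_0; field).
  assert (1 < cosh c) by (apply cosh_gt1; lra).
  assert (0 < (cosh c - 1) * (z - 0)) by (apply Rmult_lt_0_compat; lra).
  lra.
Qed.

Lemma tanh_cont g : continuity (fun x => x - tanh (g * x)).
Proof.
  intros x. apply derivable_continuous_pt.
  exists (1 - g * (1 - tanh (g * x) ^ 2)).
  apply is_derive_Reals. unfold tanh, sinh, cosh. auto_derive.
  - pose proof (exp_pos (g*x)); pose proof (exp_pos (-(g*x))). lra.
  - pose proof (exp_pos (g*x)); pose proof (exp_pos (-(g*x))). field. lra.
Qed.

Lemma m_facts g m : 1 < g -> m = tanh (g * m) -> (forall x, x = tanh (g * x) -> x <= m) ->
  0 < m /\ m < 1 /\ g * (1 - m ^ 2) < 1.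
Proof.
  intros Hg Hm Hmax.
  assert (Hm1 : m < 1) by (rewrite Hm; apply tanh_bounds).
  assert (Hm0 : 0 < m).
  { set (eps := (g - 1) / (2 * g)).
    assert (He : 0 < eps < 1) by (unfold eps; split; [apply Rdiv_lt_0_compat; lra | apply Rmult_lt_reg_r with (2*g); [lra| field_simplify; lra]]).
    assert (Hge : g * eps = (g - 1) / 2) by (unfold eps; field; lra).
    assert (Hf1 : eps - tanh (g * eps) < 0).
    { pose proof (tanh_eq (g * eps)) as T.
      assert (exp (g * eps) ^ 2 = exp (2 * (g * eps))) by (simpl; rewrite Rmult_1_r, <- exp_plus; f_equal; ring).
      assert (1 + 2 * (g * eps) <= exp (2 * (g * eps))) by apply exp_ineq1_le.
      set (W := exp (g * eps) ^ 2) in *. set (t := tanh (g * eps)) in *.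
      assert (HW : g <= W) by lra.
      destruct (Rlt_le_dec eps t) as [h|h]. lra. exfalso.
      assert (W * (1 - eps) <= 1 + eps) by nra.
      assert (g * (1 - eps) <= 1 + eps) by nra.
      assert (g * (1 - eps) * (2 * g) <= (1 + eps) * (2 * g)) by nra.
      assert (E1 : g * (1 - eps) * (2 * g) = g * (g + 1)) by (unfold eps; field; lra).
      assert (E2 : (1 + eps) * (2 * g) = 3 * g - 1) by (unfold eps; field; lra).
      nra. }
    assert (Hf2 : 0 < 1 - tanh (g * 1)) by (pose proof (tanh_bounds (g * 1)); lra).
    destruct (IVT _ eps 1 (tanh_cont g) (proj2 He) Hf1 Hf2) as [z [Hz Hz0]].
    assert (z <= m) by (apply Hmax; lra). lra. }
  split; [exact Hm0|]. split; [exact Hm1|].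
  set (y := g * m) in *.
  assert (Hy : 0 < y) by (unfold y; nra).
  pose proof (tanh_eq y) as T. rewrite <- Hm in T.
  assert (EW : exp y ^ 2 = exp (2 * y)) by (simpl; rewrite Rmult_1_r, <- exp_plus; f_equal; ring).
  assert (Hs := sinh_gt (2 * y) ltac:(lra)). unfold sinh in Hs. rewrite exp_Ropp in Hs. rewrite <- EW in Hs.
  set (W := exp y ^ 2) in *.
  assert (HW : 1 < W) by (unfold W; assert (1 < exp y) by (rewrite <- exp_0; apply exp_increasing; auto); nra).
  assert (H4 : 4 * y * W < W * W - 1).
  { assert (/ W * W = 1) by (field; lra). nra. }
  assert (Hkey : g * (1 - m ^ 2) * (m * (W + 1) ^ 2) < 1 * (m * (W + 1) ^ 2)).
  { replace (g * (1 - m ^ 2) * (m * (W + 1) ^ 2)) with (y * ((W + 1) ^ 2 - (m * (W + 1)) ^ 2)) by (unfold y; ring).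
    rewrite T. nra. }
  apply Rmult_lt_reg_r with (m * (W + 1) ^ 2). nra. exact Hkey.
Qed.

Lemma idx1 s k : (0 < s)%nat -> ((k + 1) mod s < s)%nat.
Proof. intros. apply Nat.mod_upper_bound. lia. Qed.
Lemma idx2 s k : (0 < s)%nat -> ((k + s - 1) mod s < s)%nat.
Proof. intros. apply Nat.mod_upper_bound. lia. Qed.

Lemma Amul_ext s al be x y k : (0 < s)%nat -> (forall j, (j < s)%nat -> x j = y j) -> (k < s)%nat ->
  Amul s al be x k = Amul s al be y k.
Proof. intros Hs H Hk. unfold Amul. rewrite !H; auto using idx1, idx2. Qed.

Lemma phiN_ext s al be x y : (0 < s)%nat -> (forall j, (j < s)%nat -> x j = y j) ->
  phiN s al be x = phiN s al be y.
Proof.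
  intros Hs H. unfold phiN, dot.
  rewrite (rsum_ext s (fun k => x k * Amul s al be x k) (fun k => y k * Amul s al be y k)).
  rewrite (rsum_ext s (fun k => ln (cosh (Amul s al be x k))) (fun k => ln (cosh (Amul s al be y k)))).
  reflexivity.
  intros k Hk. rewrite (Amul_ext s al be x y k); auto.
  intros k Hk. rewrite H, (Amul_ext s al be x y k); auto.
Qed.

Lemma dot_ext s t x y : (forall j, (j < s)%nat -> x j = y j) -> dot s t x = dot s t y.
Proof. intros H. unfold dot. apply rsum_ext. intros k Hk. rewrite H; auto. Qed.

Lemma ineq1 a x y : a * (x + y) <= 1 * (a * a) + / 2 * (x * x) + / 2 * (y * y).
Proof. pose proof (pow2_ge_0 (a - x)). pose proof (pow2_ge_0 (a - y)). nra. Qed.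
Lemma ineq2 a x y : -1 * (1 * (a * a) + / 2 * (x * x) + / 2 * (y * y)) <= a * (x + y).
Proof. pose proof (pow2_ge_0 (a + x)). pose proof (pow2_ge_0 (a + y)). nra. Qed.
Lemma ineq3 a x y : (x + y) ^ 2 <= 0 * (a * a) + 2 * (x * x) + 2 * (y * y).
Proof. pose proof (pow2_ge_0 (x - y)). nra. Qed.

Definition Bv s (v : nat -> R) k := v ((k + 1) mod s)%nat + v ((k + s - 1) mod s)%nat.

Lemma quad_bound s al be q mu v : (0 < s)%nat -> 0 < al -> 2 * al < be -> 0 <= q ->
  mu <= (be - 2 * al) - q * (be - 2 * al) ^ 2 -> mu <= (be + 2 * al) - q * (be + 2 * al) ^ 2 ->
  mu * rsum s (fun k => v k * v k) <=
  rsum s (fun k => v k * Amul s al be v k - q * (Amul s al be v k) ^ 2).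
Proof.
  intros Hs Hal Hbe Hq Hmu1 Hmu2.
  set (N := rsum s (fun k => v k * v k)).
  set (p := rsum s (fun k => v k * Bv s v k)).
  set (T := rsum s (fun k => Bv s v k ^ 2)).
  assert (E : rsum s (fun k => v k * Amul s al be v k - q * (Amul s al be v k) ^ 2)
     = (be - q * be ^ 2) * N + (al - 2 * q * al * be) * p + (- q * al ^ 2) * T).
  { unfold N, p, T. rewrite <- rsum_comb. apply rsum_ext. intros k _. unfold Amul, Bv. ring. }
  rewrite E.
  assert (Hcyc1 : rsum s (fun k => v ((k + 1) mod s)%nat * v ((k + 1) mod s)%nat) = N)
    by (apply (rsum_cyc1 s (fun j => v j * v j)); auto).
  assert (Hcyc2 : rsum s (fun k => v ((k + s - 1) mod s)%nat * v ((k + s - 1) mod s)%nat) = N)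
    by (apply (rsum_cyc2 s (fun j => v j * v j)); auto).
  assert (Sum2 : rsum s (fun k => 1 * (v k * v k) + / 2 * (v ((k + 1) mod s)%nat * v ((k + 1) mod s)%nat)
                    + / 2 * (v ((k + s - 1) mod s)%nat * v ((k + s - 1) mod s)%nat)) = 2 * N).
  { rewrite rsum_comb. rewrite Hcyc1, Hcyc2. fold N. field. }
  assert (Sum4 : rsum s (fun k => 0 * (v k * v k) + 2 * (v ((k + 1) mod s)%nat * v ((k + 1) mod s)%nat)
                    + 2 * (v ((k + s - 1) mod s)%nat * v ((k + s - 1) mod s)%nat)) = 4 * N).
  { rewrite rsum_comb. rewrite Hcyc1, Hcyc2. fold N. field. }
  assert (Hp1 : p <= 2 * N).
  { rewrite <- Sum2. unfold p. apply rsum_le. intros k _. unfold Bv. apply ineq1. }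
  assert (Hp2 : - (2 * N) <= p).
  { rewrite <- Sum2. rewrite <- (Rmult_1_l p). replace (- rsum _ _) with (-1 * rsum s (fun k => 1 * (v k * v k) + / 2 * (v ((k + 1) mod s)%nat * v ((k + 1) mod s)%nat)
                    + / 2 * (v ((k + s - 1) mod s)%nat * v ((k + s - 1) mod s)%nat))) by ring.
    unfold p. rewrite <- !rsum_scal. apply rsum_le. intros k _. unfold Bv. match goal with |- _ <= 1 * (?a * (?x + ?y)) => pose proof (ineq2 a x y) end. lra. }
  assert (HT1 : T <= 4 * N).
  { rewrite <- Sum4. unfold T. apply rsum_le. intros k _. unfold Bv. apply ineq3. }
  assert (HN : 0 <= N). { apply rsum_nonneg. intros. nra. }
  set (a := be - 2 * al) in *. set (b := be + 2 * al) in *.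
  assert (Id : (be - q * be ^ 2) * N + (al - 2 * q * al * be) * p + (- q * al ^ 2) * (4 * N)
     = ((2 * N - p) / 4) * (a - q * a ^ 2) + ((2 * N + p) / 4) * (b - q * b ^ 2))
    by (unfold a, b; field).
  assert (q * al ^ 2 * (4 * N - T) >= 0).
  { apply Rle_ge. apply Rmult_le_pos. apply Rmult_le_pos; nra. lra. }
  assert (((2 * N - p) / 4) * mu <= ((2 * N - p) / 4) * (a - q * a ^ 2)) by (apply Rmult_le_compat_l; lra).
  assert (((2 * N + p) / 4) * mu <= ((2 * N + p) / 4) * (b - q * b ^ 2)) by (apply Rmult_le_compat_l; lra).
  nra.
Qed.

Definition Qf s al be q (v : nat -> R) :=
  rsum s (fun k => v k * Amul s al be v k - q * (Amul s al be v k) ^ 2).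

Lemma phiN_sum s al be x : phiN s al be x =
  rsum s (fun k => / 2 * (x k * Amul s al be x k) - ln (cosh (Amul s al be x k))).
Proof. unfold phiN, dot. rewrite rsum_minus, rsum_scal. reflexivity. Qed.

Lemma Amul_lin s al be l z w k : Amul s al be (lincomb l z w) k = l * Amul s al be z k + (1 - l) * Amul s al be w k.
Proof. unfold Amul, lincomb. ring. Qed.
Lemma Amul_sub s al be z w k : Amul s al be (fun j => z j - w j) k = Amul s al be z k - Amul s al be w k.
Proof. unfold Amul. ring. Qed.

Lemma phi_conv s al be u0 q z w l : 0 <= u0 -> 1 - tanh u0 ^ 2 <= q ->
  (forall k, (k < s)%nat -> u0 <= Amul s al be z k) -> (forall k, (k < s)%nat -> u0 <= Amul s al be w k) ->
  0 <= l <= 1 ->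
  phiN s al be (lincomb l z w) <= l * phiN s al be z + (1 - l) * phiN s al be w
     - l * (1 - l) / 2 * Qf s al be q (fun j => z j - w j).
Proof.
  intros H0 Hq Hz Hw Hl. rewrite !phiN_sum. unfold Qf.
  apply Rle_trans with (rsum s (fun k =>
     l * (/ 2 * (z k * Amul s al be z k) - ln (cosh (Amul s al be z k)))
   + (1 - l) * (/ 2 * (w k * Amul s al be w k) - ln (cosh (Amul s al be w k)))
   + (- (l * (1 - l) / 2)) * ((z k - w k) * Amul s al be (fun j => z j - w j) k
                               - q * (Amul s al be (fun j => z j - w j) k) ^ 2))).
  - apply rsum_le. intros k Hk. rewrite Amul_lin, Amul_sub. unfold lincomb.
    assert (G := g_conv u0 q (Amul s al be z k) (Amul s al be w k) l H0 Hq (Hz k Hk) (Hw k Hk) Hl).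
    set (a := Amul s al be z k) in *. set (b := Amul s al be w k) in *.
    set (ga := ln (cosh a)) in *. set (gb := ln (cosh b)) in *.
    set (gm := ln (cosh (l * a + (1 - l) * b))) in *.
    assert (Id : / 2 * ((l * z k + (1 - l) * w k) * (l * a + (1 - l) * b))
       = l * (/ 2 * (z k * a)) + (1 - l) * (/ 2 * (w k * b)) - l * (1 - l) / 2 * ((z k - w k) * (a - b)))
      by field.
    assert (Id2 : q / 2 * l * (1 - l) * (a - b) ^ 2 = l * (1 - l) / 2 * (q * (a - b) ^ 2)) by field.
    nra.
  - right. rewrite rsum_comb. ring.
Qed.

Lemma abs3 be al x y z : 0 <= be -> 0 <= al ->
  Rabs (be * x + al * (y + z)) <= be * Rabs x + al * (Rabs y + Rabs z).
Proof.
  intros. eapply Rle_trans. apply Rabs_triang. rewrite !Rabs_mult, !(Rabs_pos_eq be), !(Rabs_pos_eq al) by auto.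
  apply Rplus_le_compat_l. apply Rmult_le_compat_l; auto. apply Rabs_triang.
Qed.

Lemma phi_lip s al be B : (0 < s)%nat -> 0 <= al -> 0 <= be -> 0 <= B -> exists L, 0 <= L /\ forall z w,
  (forall k, (k < s)%nat -> Rabs (z k) <= B) -> (forall k, (k < s)%nat -> Rabs (w k) <= B) ->
  Rabs (phiN s al be z - phiN s al be w) <= L * Dist s z w.
Proof.
  intros Hs Hal Hbe HB. set (g := be + 2 * al).
  exists (/ 2 * g * B + INR s * (/ 2 * B * g + g)).
  assert (Hg : 0 <= g) by (unfold g; lra).
  split. { apply Rplus_le_le_0_compat. apply Rmult_le_pos; [apply Rmult_le_pos|]; lra.
           apply Rmult_le_pos. apply pos_INR. apply Rplus_le_le_0_compat; [apply Rmult_le_pos; [apply Rmult_le_pos|]|]; lra. }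
  intros z w Hz Hw.
  set (D := Dist s z w).
  assert (HD : forall j, (j < s)%nat -> Rabs (z j - w j) <= D).
  { intros j Hj. unfold D, Dist. apply (rsum_term s (fun k => Rabs (z k - w k))); auto. intros; apply Rabs_pos. }
  assert (HD0 : 0 <= D) by (unfold D, Dist; apply rsum_nonneg; intros; apply Rabs_pos).
  assert (HA : forall k, (k < s)%nat -> Rabs (Amul s al be z k) <= g * B).
  { intros k Hk. unfold Amul. eapply Rle_trans. apply abs3; auto.
    pose proof (Hz k Hk). pose proof (Hz _ (idx1 s k Hs)). pose proof (Hz _ (idx2 s k Hs)).
    unfold g. nra. }
  assert (HAd : forall k, (k < s)%nat -> Rabs (Amul s al be z k - Amul s al be w k) <= g * D).
  { intros k Hk. rewrite <- Amul_sub. unfold Amul. eapply Rle_trans. apply abs3; auto.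
    pose proof (HD k Hk). pose proof (HD _ (idx1 s k Hs)). pose proof (HD _ (idx2 s k Hs)).
    unfold g. nra. }
  rewrite !phiN_sum, <- rsum_minus. eapply Rle_trans. apply rsum_abs.
  apply Rle_trans with (rsum s (fun k => / 2 * g * B * Rabs (z k - w k) + (/ 2 * B * g * D + g * D))).
  - apply rsum_le. intros k Hk.
    pose proof (HAd k Hk). pose proof (HA k Hk).
    set (a := Amul s al be z k) in *. set (b := Amul s al be w k) in *.
    replace (/ 2 * (z k * a) - ln (cosh a) - (/ 2 * (w k * b) - ln (cosh b)))
      with (/ 2 * ((z k - w k) * a + w k * (a - b)) - (ln (cosh a) - ln (cosh b))) by field.
    eapply Rle_trans. apply Rabs_triang. rewrite Rabs_Ropp.
    pose proof (lncosh_lip a b).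
    rewrite Rabs_mult, (Rabs_pos_eq (/2)) by lra.
    assert (Rabs ((z k - w k) * a + w k * (a - b)) <= Rabs (z k - w k) * (g * B) + B * (g * D)).
    { eapply Rle_trans. apply Rabs_triang. rewrite !Rabs_mult.
      apply Rplus_le_compat; apply Rmult_le_compat; try apply Rabs_pos; auto; lra. }
    match goal with H : Rabs ?X <= _ |- _ => assert (/ 2 * Rabs X <= / 2 * (Rabs (z k - w k) * (g * B) + B * (g * D))) by (apply Rmult_le_compat_l; lra) end.
    lra.
  - rewrite rsum_plus, rsum_scal, rsum_const. fold (Dist s z w). fold D. right. ring.
Qed.

Lemma exp_lip_aux M p1 p2 : p2 <= p1 -> p1 <= M -> Rabs (exp p1 - exp p2) <= exp M * Rabs (p1 - p2).
Proof.
  intros H12 H1.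
  assert (E : exp p2 = exp p1 * exp (p2 - p1)) by (rewrite <- exp_plus; f_equal; ring).
  pose proof (exp_ineq1_le (p2 - p1)).
  assert (exp (p2 - p1) <= 1) by (rewrite <- exp_0; destruct (Req_dec p2 p1); [subst; unfold Rminus; rewrite Rplus_opp_r; lra| apply Rlt_le, exp_increasing; lra]).
  pose proof (exp_pos p1). pose proof (exp_pos (p2 - p1)).
  assert (exp p1 <= exp M) by (destruct (Req_dec p1 M); [subst; lra| apply Rlt_le, exp_increasing; lra]).
  rewrite E. rewrite Rabs_pos_eq by nra. rewrite (Rabs_pos_eq (p1 - p2)) by lra.
  assert (exp p1 * (1 - exp (p2 - p1)) <= exp p1 * (p1 - p2)) by (apply Rmult_le_compat_l; lra).
  assert (exp p1 * (p1 - p2) <= exp M * (p1 - p2)) by (apply Rmult_le_compat_r; lra).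
  nra.
Qed.

Lemma exp_lip_le M p1 p2 : p1 <= M -> p2 <= M -> Rabs (exp p1 - exp p2) <= exp M * Rabs (p1 - p2).
Proof.
  intros. destruct (Rle_dec p2 p1). apply exp_lip_aux; auto.
  rewrite Rabs_minus_sym, (Rabs_minus_sym p1). apply exp_lip_aux; lra.
Qed.

Lemma Dist_aff s u m x y : 0 <= u -> Dist s (fun k => m + u * x k) (fun k => m + u * y k) = u * Dist s x y.
Proof.
  intros Hu. unfold Dist. rewrite <- rsum_scal. apply rsum_ext. intros k _.
  replace (m + u * x k - (m + u * y k)) with (u * (x k - y k)) by ring.
  rewrite Rabs_mult, (Rabs_pos_eq u) by auto. reflexivity.
Qed.

Lemma rho_lip s al be m u c R0 : (0 < s)%nat -> 0 <= al -> 0 <= be -> 0 < u -> 0 < c -> 0 <= R0 ->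
  Lipb s (- R0) R0 (fun x => exp (- c * (phiN s al be (fun k => m + u * x k) - phiN s al be (cst m)))).
Proof.
  intros Hs Hal Hbe Hu Hc HR0.
  destruct (phi_lip s al be (Rabs m + u * R0) Hs Hal Hbe) as [L [HL HLip]].
  { pose proof (Rabs_pos m). nra. }
  set (E := fun x : nat -> R => - c * (phiN s al be (fun k => m + u * x k) - phiN s al be (cst m))).
  assert (Hb : forall x, in_box s (- R0) R0 x -> forall k, (k < s)%nat -> Rabs (m + u * x k) <= Rabs m + u * R0).
  { intros x Hx k Hk. eapply Rle_trans. apply Rabs_triang. rewrite Rabs_mult, (Rabs_pos_eq u) by lra.
    assert (Rabs (x k) <= R0) by (apply Rabs_le; apply Hx; auto). nra. }
  assert (HE : forall x y, in_box s (- R0) R0 x -> in_box s (- R0) R0 y ->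
     Rabs (E x - E y) <= c * L * u * Dist s x y).
  { intros x y Hx Hy. unfold E.
    replace (- c * (phiN s al be (fun k => m + u * x k) - phiN s al be (cst m)) -
             - c * (phiN s al be (fun k => m + u * y k) - phiN s al be (cst m)))
      with (- c * (phiN s al be (fun k => m + u * x k) - phiN s al be (fun k => m + u * y k))) by ring.
    rewrite Rabs_mult, Rabs_Ropp, (Rabs_pos_eq c) by lra.
    assert (H := HLip _ _ (Hb x Hx) (Hb y Hy)). rewrite Dist_aff in H by lra.
    replace (c * L * u * Dist s x y) with (c * (L * (u * Dist s x y))) by ring.
    apply Rmult_le_compat_l; lra. }
  assert (H0box : in_box s (- R0) R0 (cst 0)) by (intros k _; unfold cst; lra).
  assert (HE0 : E (cst 0) = 0).
  { unfold E. rewrite (phiN_ext s al be _ (cst m)) by (auto; intros; unfold cst; ring). ring. }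
  assert (HD0 : forall x, in_box s (- R0) R0 x -> Dist s x (cst 0) <= INR s * R0).
  { intros x Hx. unfold Dist. rewrite <- rsum_const. apply rsum_le. intros k Hk. unfold cst.
    rewrite Rminus_0_r. apply Rabs_le. apply Hx; auto. }
  assert (HDn : forall x y, 0 <= Dist s x y) by (intros; unfold Dist; apply rsum_nonneg; intros; apply Rabs_pos).
  set (M := c * L * u * (INR s * R0)).
  assert (HM : forall x, in_box s (- R0) R0 x -> E x <= M).
  { intros x Hx. assert (H := HE x (cst 0) Hx H0box). rewrite HE0, Rminus_0_r in H.
    assert (c * L * u * Dist s x (cst 0) <= M).
    { unfold M. apply Rmult_le_compat_l. apply Rmult_le_pos; [apply Rmult_le_pos|]; lra. apply HD0; auto. }
    pose proof (Rle_abs (E x)). lra. }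
  exists (exp M * (c * L * u)). split.
  { apply Rmult_le_pos. pose proof (exp_pos M); lra. apply Rmult_le_pos; [apply Rmult_le_pos|]; lra. }
  intros x y Hx Hy. change (Rabs (exp (E x) - exp (E y)) <= exp M * (c * L * u) * Dist s x y).
  eapply Rle_trans. apply exp_lip_le; apply HM; auto.
  rewrite Rmult_assoc. apply Rmult_le_compat_l. pose proof (exp_pos M); lra. apply HE; auto.
Qed.

Lemma dot_aff s t m u y : dot s t (fun k => m + u * y k) = dot s t (cst m) + u * dot s t y.
Proof. unfold dot, cst. rewrite <- rsum_scal, <- rsum_plus. apply rsum_ext. intros; ring. Qed.

Lemma dot_0 s y : dot s (cst 0) y = 0.
Proof. unfold dot, cst. rewrite (rsum_ext s _ (fun _ => 0)). rewrite rsum_const. ring. intros; ring. Qed.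

Theorem lemma7p1 (alpha beta mstar : R) (s : nat) :
  0 < 2 * alpha -> 2 * alpha < beta -> 1 < beta + 2 * alpha -> (0 < s)%nat ->
  mstar = tanh ((beta + 2 * alpha) * mstar) ->
  (forall x, x = tanh ((beta + 2 * alpha) * x) -> x <= mstar) ->
  exists r0, 0 < r0 /\
    forall (N : nat) (t : nat -> R) (r : R), (0 < N)%nat -> 0 < r < r0 ->
      JN s N alpha beta t r mstar / JN s N alpha beta (cst 0) r mstar
        = expect_exp s N alpha beta mstar r t
      /\ boxint s (- rho_box_radius s N r) (rho_box_radius s N r)
                (rhoN s N alpha beta mstar r) = 1
      /\ strongly_log_concave s (rhoN s N alpha beta mstar r).
Proof.
  intros Hal Hbe Hg Hs Hm Hmax.
  set (g := beta + 2 * alpha) in *.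
  destruct (m_facts g mstar Hg Hm Hmax) as [Hm0 [Hm1 Hgm]].
  assert (Hginv : / g * g = 1) by (field; lra).
  assert (Hginv0 : 0 < / g) by (apply Rinv_0_lt_compat; lra).
  assert (Hig : 0 < 1 - / g) by nra.
  set (sq := sqrt (1 - / g)).
  assert (Hsq2 : sq * sq = 1 - / g) by (apply sqrt_sqrt; lra).
  assert (Hsq0 : 0 <= sq) by apply sqrt_pos.
  assert (Hmsq : sq < mstar).
  { assert (1 - mstar ^ 2 < / g) by nra. nra. }
  set (p := (mstar + sq) / 2).
  set (r0 := (mstar - p) / g).
  assert (Hr0 : 0 < r0) by (unfold r0, p; apply Rdiv_lt_0_compat; lra).
  assert (Hr0m : r0 < mstar).
  { assert (E : r0 * g = mstar - p) by (unfold r0; field; lra). unfold p in E. nra. }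
  exists r0. split; [exact Hr0|].
  intros N t r HN Hr.
  set (u0 := g * (mstar - r0)).
  assert (Hu0 : 0 <= u0) by (unfold u0; apply Rmult_le_pos; lra).
  assert (Htu0 : p <= tanh u0).
  { pose proof (tanh_lip (g * mstar) u0) as T. rewrite <- Hm in T.
    replace (g * mstar - u0) with (mstar - p) in T by (unfold u0, r0; field; lra).
    rewrite (Rabs_pos_eq (mstar - p)) in T by (unfold p; lra). unfold Rabs in T. destruct Rcase_abs in T; lra. }
  set (q := 1 - p ^ 2).
  assert (Hp0 : 0 < p) by (unfold p; lra).
  assert (Hp1 : p < 1) by (unfold p; nra).
  assert (Hq : 1 - tanh u0 ^ 2 <= q) by (unfold q; nra).
  assert (Hq0 : 0 <= q) by (unfold q; nra).
  assert (Hqg : q * g < 1).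
  { unfold q. assert (sq ^ 2 < p ^ 2) by (unfold p; nra). assert ((1 - p ^ 2) * g < (1 - sq ^ 2) * g) by nra.
    assert ((1 - sq ^ 2) * g = 1) by (replace (sq ^ 2) with (sq * sq) by ring; rewrite Hsq2; field; lra). lra. }
  set (a := beta - 2 * alpha).
  set (mu := Rmin (a - q * a ^ 2) (g - q * g ^ 2)).
  assert (Hmu : 0 < mu).
  { assert (Ha : 0 < a) by (unfold a; lra).
    assert (q * a <= q * g) by (apply Rmult_le_compat_l; unfold a, g; lra).
    assert (0 < a * (1 - q * a)) by (apply Rmult_lt_0_compat; lra).
    assert (0 < g * (1 - q * g)) by (apply Rmult_lt_0_compat; lra).
    unfold mu, Rmin. destruct Rle_dec; nra. }
  assert (HNr : 0 < INR N) by (apply lt_0_INR; auto).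
  assert (HSr : 0 < INR s) by (apply lt_0_INR; auto).
  set (c := INR N / INR s).
  assert (Hc : 0 < c) by (unfold c; apply Rdiv_lt_0_compat; auto).
  set (u := sqrt (INR s / INR N)).
  assert (Hu : 0 < u) by (apply sqrt_lt_R0; apply Rdiv_lt_0_compat; auto).
  set (sc := sqrt c).
  assert (Hsc : 0 < sc) by (apply sqrt_lt_R0; auto).
  assert (Husc : u * sc = 1).
  { unfold u, sc, c. rewrite <- sqrt_mult_alt. replace (INR s / INR N * (INR N / INR s)) with 1 by (field; lra).
    apply sqrt_1. apply Rlt_le, Rdiv_lt_0_compat; auto. }
  assert (Hcu2 : c * u ^ 2 = 1).
  { replace (u ^ 2) with (u * u) by ring. unfold u. rewrite sqrt_sqrt. unfold c. field; lra.
    apply Rlt_le, Rdiv_lt_0_compat; auto. }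
  set (R0 := sc * r).
  assert (HR0 : 0 < R0) by (unfold R0; nra).
  assert (HuR0 : u * R0 = r) by (unfold R0; rewrite <- Rmult_assoc, Husc; ring).
  set (rc := fun x : nat -> R => exp (- c * (phiN s alpha beta (fun k => mstar + u * x k) - phiN s alpha beta (cst mstar)))).
  assert (Hrc : forall x, rho_core s N alpha beta mstar x = rc x) by reflexivity.
  set (Z := rho_Z s N alpha beta mstar r).
  assert (HZ : Z = boxint s (- R0) R0 rc) by reflexivity.
  assert (HZpos : 0 < Z).
  { rewrite HZ. apply boxint_pos. lra. apply rho_lip; auto; lra.
    intros x _. unfold rc. apply exp_pos. }
  assert (Hbox : - R0 <= R0) by lra.
  assert (JNform : forall t', JN s N alpha beta t' r mstar =
            boxint s (- R0) R0 (fun y => exp (dot s t' y) * rc y)).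
  { intros t'.
    transitivity (sc ^ s * exp (c * phiN s alpha beta (cst mstar) - sc * dot s t' (cst mstar))
       * boxint s (u * (- R0) + mstar) (u * R0 + mstar)
           (fun x => exp (- c * phiN s alpha beta x + sc * dot s t' x))).
    { replace (u * (- R0) + mstar) with (mstar - r) by lra.
      replace (u * R0 + mstar) with (mstar + r) by lra. reflexivity. }
    rewrite boxint_cov.
    2:{ lra. }
    2:{ intros x y H. rewrite (phiN_ext s alpha beta x y), (dot_ext s t' x y); auto. }
    assert (Hp : sc ^ s * u ^ s = 1) by (rewrite <- Rpow_mult_distr, Rmult_comm, Husc; apply pow1).
    assert (Eq1 : forall K B, sc ^ s * K * (u ^ s * B) = K * B).
    { intros. replace (sc ^ s * K * (u ^ s * B)) with ((sc ^ s * u ^ s) * K * B) by ring. rewrite Hp. ring. }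
    rewrite Eq1. rewrite <- boxint_scal. apply boxint_ext. exact Hbox.
    intros y Hy. unfold rc, aff. rewrite <- !exp_plus. f_equal.
    rewrite dot_aff.
    replace (sc * (dot s t' (cst mstar) + u * dot s t' y)) with (sc * dot s t' (cst mstar) + (u * sc) * dot s t' y) by ring.
    rewrite Husc. ring. }
  assert (HJ0 : JN s N alpha beta (cst 0) r mstar = Z).
  { rewrite JNform, HZ. apply boxint_ext. exact Hbox. intros y _. rewrite dot_0, exp_0. ring. }
  assert (Hind : forall x, in_box s (- R0) R0 x -> rhoN s N alpha beta mstar r x = / Z * rc x).
  { intros x Hx. unfold rhoN. cbv zeta. destruct excluded_middle_informative as [_|Hn].
    - change (rho_Z s N alpha beta mstar r) with Z. rewrite Hrc. field. lra.
    - exfalso. apply Hn. exact Hx. }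
  split; [|split].
  - rewrite HJ0. unfold expect_exp. cbv zeta. change (rho_box_radius s N r) with R0.
    rewrite (boxint_ext s (- R0) R0 _ (fun x => / Z * (exp (dot s t x) * rc x)) Hbox).
    2:{ intros x Hx. rewrite Hind by exact Hx. ring. }
    rewrite boxint_scal, JNform.
    generalize (boxint s (- R0) R0 (fun y => exp (dot s t y) * rc y)). intros B. field. lra.
  - change (rho_box_radius s N r) with R0.
    rewrite (boxint_ext s (- R0) R0 _ (fun x => / Z * rc x) Hbox Hind).
    rewrite boxint_scal, <- HZ. field. lra.
  - exists (in_box s (- R0) R0).
    exists (fun x => c * (phiN s alpha beta (fun k => mstar + u * x k) - phiN s alpha beta (cst mstar)) + ln Z).
    split; [|split; [|split]].
    + intros x y l Hx Hy Hl k Hk. unfold lincomb. specialize (Hx k Hk); specialize (Hy k Hk). nra.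
    + exists mu. split; [exact Hmu|]. intros x y l Hx Hy Hl.
      set (z := fun k => mstar + u * x k). set (w := fun k => mstar + u * y k).
      assert (Emid : (fun k => mstar + u * lincomb l x y k) = lincomb l z w).
      { extensionality k. unfold lincomb, z, w. ring. }
      rewrite Emid.
      assert (Hzb : forall v, in_box s (- R0) R0 v -> forall k, (k < s)%nat ->
                u0 <= Amul s alpha beta (fun j => mstar + u * v j) k).
      { intros v Hv k Hk. unfold Amul.
        assert (H : forall j, (j < s)%nat -> mstar - r0 <= mstar + u * v j).
        { intros j Hj. specialize (Hv j Hj). assert (u * v j >= - (u * R0)) by nra. lra. }
        pose proof (H k Hk). pose proof (H _ (idx1 s k Hs)). pose proof (H _ (idx2 s k Hs)).
        unfold u0, g. nra. }
      assert (HC := phi_conv s alpha beta u0 q z w l Hu0 Hq (Hzb x Hx) (Hzb y Hy) Hl).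
      set (S := sqnorm s (fun k => x k - y k)).
      assert (ES : rsum s (fun k => (z k - w k) * (z k - w k)) = u ^ 2 * S).
      { unfold S, sqnorm, dot. rewrite <- rsum_scal. apply rsum_ext. intros. unfold z, w. ring. }
      assert (HQ : mu * (u ^ 2 * S) <= Qf s alpha beta q (fun j => z j - w j)).
      { unfold Qf. rewrite <- ES. apply quad_bound; auto; try lra. apply Rmin_l. apply Rmin_r. }
      assert (H1 := Rmult_le_compat_l c _ _ (Rlt_le _ _ Hc) HC).
      assert (Hll : 0 <= c * (l * (1 - l) / 2)) by (apply Rmult_le_pos; [lra| nra]).
      assert (H2 := Rmult_le_compat_l _ _ _ Hll HQ).
      assert (E3 : c * (l * (1 - l) / 2) * (mu * (u ^ 2 * S)) = (c * u ^ 2) * (mu / 2 * l * (1 - l) * S)) by field.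
      rewrite Hcu2 in E3.
      generalize (ln Z). intros LZ.
      generalize dependent (Qf s alpha beta q (fun j => z j - w j)). intros Qv HC H1 HQ H2.
      lra.
    + intros x Hx. rewrite Hind by exact Hx. unfold rc.
      replace (- (c * (phiN s alpha beta (fun k => mstar + u * x k) - phiN s alpha beta (cst mstar)) + ln Z))
        with (- c * (phiN s alpha beta (fun k => mstar + u * x k) - phiN s alpha beta (cst mstar)) + - ln Z) by ring.
      rewrite exp_plus, exp_Ropp, exp_ln by lra. apply Rmult_comm.
    + intros x Hx. unfold rhoN. cbv zeta. destruct excluded_middle_informative as [H|_].
      contradiction. apply Rmult_0_r.
Qed.
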